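(* Let $n\ge 2$, $b>0$, and let $p_0,\dots,p_{n-2}$ be complex-valued, $C^\infty$, $b$-periodic functions on $\mathbb{R}$; let $\mathcal{L}u := u^{(n)}+\sum_{k=0}^{n-2}p_k(x)u^{(k)}$. If $\psi$ is an eigenfunction of the multipoint problem $$\mathcal{L}u=\lambda u,\qquad u(0)=u(b)=\cdots=u((n-1)b)=0$$ (i.e. a nontrivial solution for some $\lambda\in\mathbb{C}$), then $\psi(kb)=0$ for all $k\in\mathbb{Z}$. *)

(* Defs.v *)
From Stdlib Require Import Reals.
From Coquelicot Require Import Coquelicot.
Open Scope R_scope.

Definition derivs_upto (f : R -> C) (n : nat) (D : nat -> R -> C) : Prop :=
  (forall x, D O x = f x) /\
  (forall (k : nat) (x : R), (k < n)%nat -> is_derive (D k) x (D (S k) x)).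

Definition smooth (f : R -> C) : Prop :=
  exists D : nat -> R -> C,
    (forall x, D O x = f x) /\
    (forall (k : nat) (x : R), is_derive (D k) x (D (S k) x)).

Definition periodic (f : R -> C) (b : R) : Prop :=
  forall x, f (x + b) = f x.

(* Main.v *)
Require Import Defs.
From Stdlib Require Import Reals ZArith Lra Lia Classical FunctionalExtensionality.
From Coquelicot Require Import Coquelicot.
Open Scope R_scope.

Lemma is_derive_lin {V W : NormedModule R_AbsRing} (L : V -> W) (f : R -> V) x l :
  is_linear L -> is_derive f x l -> is_derive (fun y => L (f y)) x (L l).
Proof.
  intros HL H. unfold is_derive in *. eapply filterdiff_ext_lin.
  apply filterdiff_comp. exact H. apply filterdiff_linear; auto.
  intros y; simpl. apply (linear_scal L HL).
Qed.

Lemma der_Re (f : R -> C) x l : is_derive f x l -> is_derive (fun y => fst (f y)) x (fst l).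
Proof. intros H. apply (is_derive_lin (fun t : C_R_NormedModule => fst t)); auto.
  apply is_linear_fst. Qed.

Lemma der_Im (f : R -> C) x l : is_derive f x l -> is_derive (fun y => snd (f y)) x (snd l).
Proof. intros H. apply (is_derive_lin (fun t : C_R_NormedModule => snd t)); auto.
  apply is_linear_snd. Qed.

Lemma norm_C (z : C) : @norm R_AbsRing C_R_NormedModule z = Cmod z.
Proof.
  unfold norm; simpl. unfold prod_norm, Cmod. simpl. unfold abs; simpl.
  assert (Ha : forall a:R, norm a * (norm a * 1) = a * (a*1)).
  { intros a; change (norm a) with (Rabs a); rewrite !Rmult_1_r, <- Rabs_mult, Rabs_pos_eq; nra. }
  rewrite !Ha. reflexivity.
Qed.

Lemma lin_cmul (c : C) : @is_linear R_AbsRing C_R_NormedModule C_R_NormedModule (fun z => Cmult c z).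
Proof.
  split.
  - intros x y. change (c * (x + y) = c * x + c * y)%C. ring.
  - intros k x. destruct c, x. unfold scal; simpl. unfold prod_scal, Cmult; simpl.
    unfold scal; simpl; unfold mult; simpl. f_equal; ring.
  - exists (Cmod c + 1). split. pose proof (Cmod_ge_0 c); lra.
    intros x. rewrite !norm_C, Cmod_mult. pose proof (Cmod_ge_0 x); nra.
Qed.

Lemma der_cmul (c : C) (f : R -> C) x l : is_derive f x l -> is_derive (fun y => c * f y)%C x (c * l)%C.
Proof. intros H. apply (is_derive_lin (fun z : C_R_NormedModule => Cmult c z)); auto. apply lin_cmul. Qed.

Lemma der_translate (f : R -> C) a x l : is_derive f (x + a) l -> is_derive (fun y => f (y + a)) x l.
Proof.
  intros H. assert (H2 : is_derive (fun y : R => y + a) x 1).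
  { auto_derive; auto; ring. }
  pose proof (is_derive_comp f (fun y => y + a) x l 1 H H2) as H3.
  unfold is_derive in *. eapply filterdiff_ext_lin; [exact H3|].
  intros y. cbv beta. change (IZR (Zpos xH)) with (@one (AbsRing.Ring R_AbsRing)). rewrite scal_one. reflexivity.
Qed.

Definition Sol (n : nat) (p : nat -> R -> C) (lam : C) (E : nat -> R -> C) :=
 (forall k x, (k < n)%nat -> is_derive (E k) x (E (S k) x)) /\
 (forall x, (E n x + sum_n (fun k => p k x * E k x) (n - 2))%C = (lam * E O x)%C).

Fixpoint csum (f : nat -> C) (N : nat) : C :=
  match N with O => 0%C | S m => (csum f m + f m)%C end.

Lemma Sol_ext n p lam E E' : (forall k x, E k x = E' k x) -> Sol n p lam E -> Sol n p lam E'.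
Proof.
  intros H HS. assert (E = E'). { apply functional_extensionality; intros k; apply functional_extensionality; auto. }
  subst; auto.
Qed.

Lemma Sol_scale n p lam E c : Sol n p lam E -> Sol n p lam (fun k x => c * E k x)%C.
Proof.
  intros [H1 H2]. split.
  - intros k x Hk. apply der_cmul. auto.
  - intros x. rewrite (sum_n_ext _ (fun k => mult c (p k x * E k x)%C)).
    2:{ intros k. change (p k x * (c * E k x) = c * (p k x * E k x))%C. ring. }
    rewrite sum_n_mult_l. change (c * E n x + c * sum_n (fun k => p k x * E k x) (n - 2) = lam * (c * E 0%nat x))%C.
    transitivity (c * (E n x + sum_n (fun k => p k x * E k x) (n - 2)))%C. ring.
    rewrite H2. ring.
Qed.

Lemma Sol_plus n p lam E E' : Sol n p lam E -> Sol n p lam E' -> Sol n p lam (fun k x => E k x + E' k x)%C.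
Proof.
  intros [H1 H2] [H1' H2']. split.
  - intros k x Hk. apply (is_derive_plus (E k) (E' k)); auto.
  - intros x. rewrite (sum_n_ext _ (fun k => plus (p k x * E k x)%C (p k x * E' k x)%C)).
    2:{ intros k. change (p k x * (E k x + E' k x) = (p k x * E k x) + (p k x * E' k x))%C. ring. }
    rewrite sum_n_plus. change (E n x + E' n x + (sum_n (fun k => p k x * E k x) (n - 2) + sum_n (fun k => p k x * E' k x) (n - 2)) = lam * (E 0%nat x + E' 0%nat x))%C.
    transitivity ((E n x + sum_n (fun k => p k x * E k x) (n - 2)) + (E' n x + sum_n (fun k => p k x * E' k x) (n - 2)))%C. ring.
    rewrite H2, H2'. ring.
Qed.

Lemma Sol_csum n p lam E0 (F : nat -> nat -> R -> C) N :
  Sol n p lam E0 -> (forall j, Sol n p lam (F j)) -> Sol n p lam (fun k x => csum (fun j => F j k x) N).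
Proof.
  intros H0 HF. induction N.
  - eapply Sol_ext; [|apply (Sol_scale _ _ _ _ 0%C H0)]. intros k x; simpl. ring.
  - simpl. apply Sol_plus; auto.
Qed.

Lemma Sol_translate n p lam E a :
  (forall k x, (k <= n - 2)%nat -> p k (x + a) = p k x) ->
  Sol n p lam E -> Sol n p lam (fun k x => E k (x + a)).
Proof.
  intros Hp [H1 H2]. split.
  - intros k x Hk. apply der_translate. auto.
  - intros x. rewrite <- (H2 (x + a)). f_equal.
    apply sum_n_ext_loc. intros k Hk. rewrite Hp; auto.
Qed.

Lemma csum_ext_loc (f g : nat -> C) N : (forall j, (j < N)%nat -> f j = g j) -> csum f N = csum g N.
Proof. induction N; intros H; simpl; auto. rewrite IHN, H; auto. Qed.

Lemma csum_plus (f g : nat -> C) N : csum (fun j => f j + g j)%C N = (csum f N + csum g N)%C.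
Proof. induction N; simpl. ring. rewrite IHN. ring. Qed.

Lemma csum_mulr (f : nat -> C) (a : C) N : csum (fun j => f j * a)%C N = (csum f N * a)%C.
Proof. induction N; simpl. ring. rewrite IHN. ring. Qed.

Lemma csum_zero (f : nat -> C) N : (forall j, (j < N)%nat -> f j = 0%C) -> csum f N = 0%C.
Proof. induction N; intros H; simpl; auto. rewrite IHN, H; auto. ring. Qed.

Lemma csum_single (f : nat -> C) N j0 : (j0 < N)%nat -> (forall j, (j < N)%nat -> j <> j0 -> f j = 0%C) -> csum f N = f j0.
Proof.
  induction N; intros Hj H; simpl. lia.
  destruct (Nat.eq_dec j0 N).
  - subst. rewrite csum_zero. ring. intros j Hj'. apply H; lia.
  - rewrite IHN; try lia. rewrite (H N); try lia. ring. intros; apply H; lia.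
Qed.

Lemma LA : forall m (v : nat -> nat -> C), exists c : nat -> C,
  (exists j, (j <= m)%nat /\ c j <> 0%C) /\
  forall i, (i < m)%nat -> csum (fun j => c j * v j i)%C (S m) = 0%C.
Proof.
  induction m; intros v.
  - exists (fun _ => 1%C). split. exists O. split; auto. intros H. injection H; lra.
    intros; lia.
  - destruct (classic (exists i, (i < S m)%nat /\ v (S m) i <> 0%C)) as [[i0 [Hi0 Hpiv]]|Hno].
    + set (piv := v (S m) i0).
      set (sk := fun i => if (i <? i0)%nat then i else S i).
      destruct (IHm (fun j i => v j (sk i) - (v j i0 / piv) * v (S m) (sk i))%C) as [d [[j [Hj Hdj]] Hd]].
      exists (fun j => if Nat.eqb j (S m) then - (csum (fun j => d j * (v j i0 / piv)) (S m)) else d j)%C.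
      split.
      * exists j. split. lia. destruct (Nat.eqb_spec j (S m)). lia. auto.
      * intros i Hi. change (csum (fun j : nat =>
          ((if Nat.eqb j (S m) then - csum (fun j0 : nat => d j0 * (v j0 i0 / piv)) (S m) else d j) * v j i)%C) (S m)
          + (if Nat.eqb (S m) (S m) then - csum (fun j0 : nat => d j0 * (v j0 i0 / piv)) (S m) else d (S m)) * v (S m) i = 0)%C.
        rewrite Nat.eqb_refl.
        rewrite (csum_ext_loc _ (fun j => d j * v j i)%C).
        2:{ intros j' Hj'. destruct (Nat.eqb_spec j' (S m)). lia. reflexivity. }
        assert (Hkey : (csum (fun j => d j * v j i) (S m) + - csum (fun j0 : nat => d j0 * (v j0 i0 / piv)) (S m) * v (S m) i
           = csum (fun j => d j * (v j i - (v j i0 / piv) * v (S m) i)) (S m))%C).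
        { rewrite (csum_ext_loc (fun j => d j * (v j i - (v j i0 / piv) * v (S m) i))%C
                    (fun j => d j * v j i + (d j * (v j i0 / piv)) * (- v (S m) i))%C).
          2:{ intros j' _. set (q := (v j' i0 / piv)%C). ring. }
          rewrite csum_plus, csum_mulr. set (s1 := csum _ _). set (s2 := csum _ _). ring. }
        rewrite Hkey.
        destruct (Nat.eq_dec i i0).
        -- subst i. apply csum_zero. intros j' _. fold piv. field.
           intro Hc. apply Hpiv. exact Hc.
        -- destruct (Nat.ltb_spec i i0).
           ++ specialize (Hd i ltac:(lia)). unfold sk in Hd.
              destruct (Nat.ltb_spec i i0); [|lia]. exact Hd.
           ++ specialize (Hd (i - 1)%nat ltac:(lia)). unfold sk in Hd.
              destruct (Nat.ltb_spec (i - 1) i0); [lia|].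
              replace (S (i - 1)) with i in Hd by lia. exact Hd.
    + exists (fun j => if Nat.eqb j (S m) then 1%C else 0%C). split.
      * exists (S m). split; auto. rewrite Nat.eqb_refl. intros H. injection H; lra.
      * intros i Hi. rewrite (csum_single _ _ (S m)); try lia.
        -- rewrite Nat.eqb_refl. assert (v (S m) i = 0%C).
           { apply NNPP. intros Hc. apply Hno. exists i; auto. }
           rewrite H. ring.
        -- intros j Hj Hne. destruct (Nat.eqb_spec j (S m)). lia. ring.
Qed.

Lemma der_cont (f : R -> R) x l : is_derive f x l -> continuity_pt f x.
Proof. intros H. apply is_derive_Reals in H. apply derivable_continuous_pt. exists l. exact H. Qed.

Lemma gron (F dF : R -> R) (K : R) : 0 <= K ->
  (forall x, is_derive F x (dF x)) -> (forall x, 0 <= F x) -> F 0 = 0 ->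
  (forall x, Rabs (dF x) <= K * F x) -> forall x, F x = 0.
Proof.
  intros HK Hd Hpos H0 Hb x.
  destruct (Rtotal_order x 0) as [Hx|[Hx|Hx]].
  - set (H := fun y => F y * exp (K * y)).
    assert (Hd' : forall y, is_derive H y (dF y * exp (K * y) + F y * (K * exp (K * y)))).
    { intros y. unfold H. apply (is_derive_mult F (fun y => exp (K * y))). apply Hd.
      auto_derive; auto; ring. intros; apply Rmult_comm. }
    destruct (MVT_gen H x 0 (fun y => dF y * exp (K * y) + F y * (K * exp (K * y)))) as [c [_ Hc]].
    { intros; apply Hd'. } { intros; eapply der_cont; apply Hd'. }
    unfold H in Hc. rewrite H0, Rmult_0_r, Rmult_0_l in Hc.
    pose proof (Hb c). pose proof (exp_pos (K * c)). pose proof (exp_pos (K * x)).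
    pose proof (Hpos x). pose proof (Hpos c).
    assert (dF c + K * F c >= 0). { apply Rabs_le_between in H1. lra. }
    assert (0 <= (dF c + K * F c) * exp (K*c)) by (apply Rmult_le_pos; lra).
    assert (F x * exp (K * x) <= 0) by nra. nra.
  - subst; auto.
  - set (H := fun y => F y * exp (- K * y)).
    assert (Hd' : forall y, is_derive H y (dF y * exp (- K * y) + F y * (- K * exp (- K * y)))).
    { intros y. unfold H. apply (is_derive_mult F (fun y => exp (- K * y))). apply Hd.
      auto_derive; auto; ring. intros; apply Rmult_comm. }
    destruct (MVT_gen H 0 x (fun y => dF y * exp (- K * y) + F y * (- K * exp (- K * y)))) as [c [_ Hc]].
    { intros; apply Hd'. } { intros; eapply der_cont; apply Hd'. }
    unfold H in Hc. rewrite H0, Rmult_0_l in Hc.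
    pose proof (Hb c). pose proof (exp_pos (- K * c)). pose proof (exp_pos (- K * x)).
    pose proof (Hpos x). pose proof (Hpos c).
    assert (dF c - K * F c <= 0). { apply Rabs_le_between in H1. lra. }
    assert ((dF c - K * F c) * exp (- K*c) <= 0).
    { apply Rmult_le_0_r; lra. }
    assert (F x * exp (- K * x) <= 0) by nra. nra.
Qed.

Fixpoint rsum (f : nat -> R) (N : nat) : R := match N with O => 0 | S m => rsum f m + f m end.

Lemma rsum_der (g : nat -> R -> R) (g' : nat -> R) N x :
  (forall i, (i < N)%nat -> is_derive (g i) x (g' i)) ->
  is_derive (fun y => rsum (fun i => g i y) N) x (rsum g' N).
Proof.
  induction N; intros H; simpl.
  - apply is_derive_Reals, derivable_pt_lim_const.
  - apply (is_derive_plus (fun y => rsum (fun i => g i y) N) (g N)). apply IHN; auto. apply H; lia.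
Qed.

Lemma rsum_abs_le (f : nat -> R) c N : (forall i, (i < N)%nat -> Rabs (f i) <= c) -> Rabs (rsum f N) <= INR N * c.
Proof.
  induction N; intros H; cbn [rsum]. rewrite Rabs_R0; simpl; lra.
  rewrite S_INR. eapply Rle_trans. apply Rabs_triang.
  assert (Rabs (rsum f N) <= INR N * c) by (apply IHN; auto).
  assert (Rabs (f N) <= c) by (apply H; lia). lra.
Qed.

Lemma rsum_nonneg (f : nat -> R) N : (forall i, (i < N)%nat -> 0 <= f i) -> 0 <= rsum f N.
Proof. induction N; intros H; simpl. lra. assert (0 <= f N) by (apply H; lia). assert (0 <= rsum f N) by auto. lra. Qed.

Lemma rsum_term (f : nat -> R) N j : (forall i, (i < N)%nat -> 0 <= f i) -> (j < N)%nat -> f j <= rsum f N.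
Proof.
  induction N; intros H Hj; simpl. lia.
  destruct (Nat.eq_dec j N). subst. assert (0 <= rsum f N) by (apply rsum_nonneg; auto). lra.
  assert (f j <= rsum f N) by (apply IHN; auto; lia). assert (0 <= f N) by (apply H; lia). lra.
Qed.

Lemma rsum_zero (f : nat -> R) N : (forall i, (i < N)%nat -> f i = 0) -> rsum f N = 0.
Proof. induction N; intros H; simpl; auto. rewrite IHN, H; auto; lra. Qed.

Lemma sq_der (f : R -> R) x l : is_derive f x l -> is_derive (fun y => f y * f y) x (2 * (f x * l)).
Proof.
  intros H. replace (2 * (f x * l)) with (plus (mult l (f x)) (mult (f x) l)).
  apply (is_derive_mult f f); auto. intros; apply Rmult_comm.
  unfold plus, mult; simpl. ring.
Qed.

Lemma Cmod_sum_n (f : nat -> C) N c : (forall k, (k <= N)%nat -> Cmod (f k) <= c) -> Cmod (sum_n f N) <= INR (S N) * c.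
Proof.
  induction N; intros H.
  - rewrite sum_O. simpl. specialize (H O (le_n _)). lra.
  - rewrite sum_Sn. change (Cmod (sum_n f N + f (S N))%C <= INR (S (S N)) * c).
    eapply Rle_trans. apply Cmod_triangle. rewrite (S_INR (S N)).
    assert (Cmod (sum_n f N) <= INR (S N) * c) by (apply IHN; auto).
    assert (Cmod (f (S N)) <= c) by auto. lra.
Qed.

Lemma Cmod_le_sum (z : C) : Cmod z <= Rabs (fst z) + Rabs (snd z).
Proof.
  unfold Cmod. rewrite <- (sqrt_Rsqr (Rabs (fst z) + Rabs (snd z))).
  2:{ pose proof (Rabs_pos (fst z)); pose proof (Rabs_pos (snd z)); lra. }
  apply sqrt_le_1_alt. unfold Rsqr.
  pose proof (Rabs_pos (fst z)); pose proof (Rabs_pos (snd z)).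
  rewrite <- (pow2_abs (fst z)), <- (pow2_abs (snd z)). nra.
Qed.

Lemma fst_le_Cmod (z : C) : Rabs (fst z) <= Cmod z.
Proof. apply re_le_Cmod. Qed.
Lemma snd_le_Cmod (z : C) : Rabs (snd z) <= Cmod z.
Proof. unfold Cmod. rewrite <- sqrt_Rsqr_abs. apply sqrt_le_1_alt. unfold Rsqr; simpl. nra. Qed.

Lemma uniq n p lam E M : (1 <= n)%nat -> 0 <= M ->
  (forall k x, (k <= n - 2)%nat -> Cmod (p k x) <= M) ->
  Sol n p lam E -> (forall i, (i < n)%nat -> E i 0 = 0%C) -> forall x, E O x = 0%C.
Proof.
  intros Hn HM Hp [Hd Heq] H0.
  set (F := fun x => rsum (fun i => fst (E i x) * fst (E i x) + snd (E i x) * snd (E i x)) n).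
  set (dF := fun x => rsum (fun i => 2 * (fst (E i x) * fst (E (S i) x)) + 2 * (snd (E i x) * snd (E (S i) x))) n).
  set (Kc := Cmod lam + INR (S (n - 2)) * M).
  assert (HKc : 0 <= Kc). { unfold Kc. pose proof (Cmod_ge_0 lam). pose proof (pos_INR (S (n-2))). nra. }
  set (L := 2 + 2 * Kc).
  assert (HFd : forall x, is_derive F x (dF x)).
  { intros x. unfold F, dF. apply (rsum_der (fun i y => fst (E i y) * fst (E i y) + snd (E i y) * snd (E i y))).
    intros i Hi. apply (is_derive_plus (fun y => fst (E i y) * fst (E i y)) (fun y => snd (E i y) * snd (E i y))).
    - apply (sq_der (fun y => fst (E i y))). apply der_Re. auto.
    - apply (sq_der (fun y => snd (E i y))). apply der_Im. auto. }
  assert (HFpos : forall x, 0 <= F x).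
  { intros x. apply rsum_nonneg. intros; nra. }
  assert (HF0 : F 0 = 0).
  { unfold F. apply rsum_zero. intros i Hi. rewrite H0; auto. simpl. ring. }
  assert (Hb : forall x, Rabs (dF x) <= (INR n * (4 * L)) * F x).
  { intros x. set (r := sqrt (F x)).
    assert (Hr : r * r = F x) by (apply sqrt_sqrt; auto).
    assert (Hr0 : 0 <= r) by apply sqrt_pos.
    assert (HA : forall i, (i < n)%nat -> Rabs (fst (E i x)) <= r /\ Rabs (snd (E i x)) <= r).
    { intros i Hi.
      assert (Ht : fst (E i x) * fst (E i x) + snd (E i x) * snd (E i x) <= F x).
      { unfold F. apply (rsum_term (fun i => fst (E i x) * fst (E i x) + snd (E i x) * snd (E i x))); auto.
        intros; nra. }
      split; unfold r; rewrite <- sqrt_Rsqr_abs; apply sqrt_le_1_alt; unfold Rsqr; nra. }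
    assert (HB : forall i, (i < n)%nat -> Cmod (E i x) <= 2 * r).
    { intros i Hi. eapply Rle_trans. apply Cmod_le_sum. destruct (HA i Hi). lra. }
    assert (HC : Cmod (E n x) <= 2 * Kc * r).
    { assert (E n x = lam * E O x - sum_n (fun k => p k x * E k x) (n - 2))%C.
      { rewrite <- Heq. ring. }
      rewrite H. unfold Cminus. eapply Rle_trans. apply Cmod_triangle.
      rewrite Cmod_opp, Cmod_mult.
      assert (Cmod (sum_n (fun k => p k x * E k x)%C (n - 2)) <= INR (S (n - 2)) * (M * (2 * r))).
      { apply Cmod_sum_n. intros k Hk. rewrite Cmod_mult. apply Rmult_le_compat; auto using Cmod_ge_0.
        apply HB. lia. }
      assert (Cmod (E 0%nat x) <= 2 * r) by (apply HB; lia).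
      pose proof (Cmod_ge_0 lam). unfold Kc. nra. }
    assert (HD : forall i, (i < n)%nat -> Rabs (fst (E (S i) x)) <= L * r /\ Rabs (snd (E (S i) x)) <= L * r).
    { intros i Hi. destruct (Nat.eq_dec (S i) n).
      - rewrite e. pose proof (fst_le_Cmod (E n x)). pose proof (snd_le_Cmod (E n x)). unfold L. nra.
      - destruct (HA (S i) ltac:(lia)). unfold L. nra. }
    unfold dF. rewrite <- Hr.
    replace (INR n * (4 * L) * (r * r)) with (INR n * (4 * L * (r * r))) by ring.
    apply rsum_abs_le. intros i Hi. destruct (HA i Hi) as [Ha1 Ha2]. destruct (HD i Hi) as [Hd1 Hd2].
    eapply Rle_trans. apply Rabs_triang. rewrite !Rabs_mult.
    rewrite (Rabs_pos_eq 2) by lra.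
    assert (Rabs (fst (E i x)) * Rabs (fst (E (S i) x)) <= r * (L * r)) by (apply Rmult_le_compat; auto using Rabs_pos).
    assert (Rabs (snd (E i x)) * Rabs (snd (E (S i) x)) <= r * (L * r)) by (apply Rmult_le_compat; auto using Rabs_pos).
    nra. }
  assert (HK : 0 <= INR n * (4 * L)). { pose proof (pos_INR n). unfold L. nra. }
  intros x. pose proof (gron F dF _ HK HFd HFpos HF0 Hb x) as Hx.
  assert (Ht : fst (E O x) * fst (E O x) + snd (E O x) * snd (E O x) <= F x).
  { unfold F. apply (rsum_term (fun i => fst (E i x) * fst (E i x) + snd (E i x) * snd (E i x))); auto.
    intros; nra. }
  rewrite Hx in Ht. destruct (E O x) as [a b0]. simpl in Ht.
  assert (a = 0) by nra. assert (b0 = 0) by nra. subst. reflexivity.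
Qed.

Lemma per_nat (f : R -> C) b : periodic f b -> forall j y, f (y + INR j * b) = f y.
Proof.
  intros Hp j. induction j; intros y.
  - simpl. f_equal. ring.
  - rewrite S_INR. replace (y + (INR j + 1) * b) with ((y + INR j * b) + b) by ring.
    rewrite Hp. auto.
Qed.

Lemma per_Z (f : R -> C) b : periodic f b -> forall y (k : Z), f (y + IZR k * b) = f y.
Proof.
  intros Hp y k. destruct (Z_le_gt_dec 0 k).
  - replace k with (Z.of_nat (Z.to_nat k)) by lia. rewrite <- INR_IZR_INZ. apply per_nat; auto.
  - replace k with (- Z.of_nat (Z.to_nat (- k)))%Z by lia. rewrite opp_IZR, <- INR_IZR_INZ.
    rewrite <- (per_nat f b Hp (Z.to_nat (-k)) (y + - INR (Z.to_nat (- k)) * b)).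
    f_equal. ring.
Qed.

Lemma p_bound (f : R -> C) b : 0 < b -> smooth f -> periodic f b ->
  exists M, 0 <= M /\ forall x, Cmod (f x) <= M.
Proof.
  intros Hb [Df [HD0 HD]] Hp.
  assert (Hf : forall x, is_derive f x (Df 1%nat x)).
  { intros x. eapply is_derive_ext; [|apply HD]. intros; apply HD0. }
  set (g := fun x => Rabs (fst (f x)) + Rabs (snd (f x))).
  assert (Hg : forall c, continuity_pt g c).
  { intros c. 
    assert (H1 : continuity_pt (fun x => fst (f x)) c) by (eapply der_cont; apply der_Re; apply Hf).
    assert (H2 : continuity_pt (fun x => snd (f x)) c) by (eapply der_cont; apply der_Im; apply Hf).
    pose proof (continuity_pt_comp _ Rabs c H1 (Rcontinuity_abs _)) as H3.
    pose proof (continuity_pt_comp _ Rabs c H2 (Rcontinuity_abs _)) as H4.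
    exact (continuity_pt_plus _ _ c H3 H4). }
  destruct (continuity_ab_maj g 0 b ltac:(lra) (fun c _ => Hg c)) as [Mx [HMx _]].
  exists (g Mx). split. unfold g; pose proof (Rabs_pos (fst (f Mx))); pose proof (Rabs_pos (snd (f Mx))); lra.
  intros x. set (k := (up (x / b) - 1)%Z). set (y := x - IZR k * b).
  destruct (archimed (x / b)) as [A1 A2].
  assert (Hk : IZR k = IZR (up (x / b)) - 1) by (unfold k; rewrite minus_IZR; reflexivity).
  set (q := x / b) in *. assert (Hq : x = q * b) by (unfold q; field; lra).
  assert (Hy : 0 <= y <= b).
  { unfold y. rewrite Hk, Hq. split; nra. }
  replace x with (y + IZR k * b) by (unfold y; ring).
  rewrite per_Z; auto. eapply Rle_trans. apply Cmod_le_sum. apply HMx. auto.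
Qed.

Lemma p_bound_all (p : nat -> R -> C) b N : 0 < b ->
  (forall k, (k <= N)%nat -> smooth (p k) /\ periodic (p k) b) ->
  exists M, 0 <= M /\ forall k x, (k <= N)%nat -> Cmod (p k x) <= M.
Proof.
  intros Hb. induction N; intros H.
  - destruct (H O (le_n _)) as [H1 H2]. destruct (p_bound _ _ Hb H1 H2) as [M [HM HM']].
    exists M. split; auto. intros k x Hk. replace k with O by lia. auto.
  - destruct IHN as [M1 [HM1 HM1']]. intros; apply H; lia.
    destruct (H (S N) (le_n _)) as [H1 H2]. destruct (p_bound _ _ Hb H1 H2) as [M [HM HM']].
    exists (Rmax M1 M). split. eapply Rle_trans; [exact HM|apply Rmax_r].
    intros k x Hk. destruct (Nat.eq_dec k (S N)).
    + subst. eapply Rle_trans; [apply HM'|apply Rmax_r].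
    + eapply Rle_trans; [apply HM1'; lia|apply Rmax_l].
Qed.

Lemma exists_max (P : nat -> Prop) N : (exists j, (j <= N)%nat /\ P j) ->
  exists j, (j <= N)%nat /\ P j /\ forall j', (j < j')%nat -> (j' <= N)%nat -> ~ P j'.
Proof.
  induction N; intros [j [Hj HP]].
  - exists O. replace j with O in HP by lia. split; auto. split; auto. intros; lia.
  - destruct (classic (P (S N))).
    + exists (S N). split; auto. split; auto. intros; lia.
    + destruct IHN as [j' [Hj' [HP' Hm]]].
      { exists j. split; auto. destruct (Nat.eq_dec j (S N)). subst; contradiction. lia. }
      exists j'. split. lia. split; auto. intros j'' H1 H2. destruct (Nat.eq_dec j'' (S N)).
      subst; auto. apply Hm; lia.
Qed.

Lemma exists_min (P : nat -> Prop) j : P j -> exists j0, P j0 /\ forall j', (j' < j0)%nat -> ~ P j'.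
Proof.
  induction j as [j IH] using (well_founded_induction Wf_nat.lt_wf). intros HP.
  destruct (classic (exists j', (j' < j)%nat /\ P j')) as [[j' [H1 H2]]|Hn].
  - apply (IH j'); auto.
  - exists j. split; auto. intros j' H1 H2. apply Hn. eauto.
Qed.

Lemma Cmult_cancel (c z : C) : c <> 0%C -> (c * z = 0)%C -> z = 0%C.
Proof. intros Hc H. replace z with (/ c * (c * z))%C by (field; auto). rewrite H. ring. Qed.

Theorem corollary4 (n : nat) (b : R) (p : nat -> R -> C)
  (psi : R -> C) (lambda : C) (D : nat -> R -> C) :
  (2 <= n)%nat -> 0 < b ->
  (forall k : nat, (k <= n - 2)%nat -> smooth (p k) /\ periodic (p k) b) ->
  derivs_upto psi n D ->
  (forall x : R,
      (D n x + sum_n (fun k => p k x * D k x) (n - 2))%C = (lambda * psi x)%C) ->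
  (forall j : nat, (j <= n - 1)%nat -> psi (INR j * b) = 0%C) ->
  (exists x : R, psi x <> 0%C) ->
  forall k : Z, psi (IZR k * b) = 0%C.
Proof.
  intros Hn Hb Hp [HD0 HD] Heq Hz _.
  destruct (p_bound_all p b (n - 2) Hb Hp) as [M [HM HMb]].
  assert (HS : Sol n p lambda D).
  { split; auto. intros x. rewrite HD0. auto. }
  assert (HT : forall j, Sol n p lambda (fun k x => D k (x + INR j * b))).
  { intros j. apply Sol_translate; auto. intros k x Hk. apply per_nat. apply Hp; auto. }
  destruct (LA n (fun j i => D i (INR j * b))) as [c [Hnt Hc]].
  set (E := fun k (x : R) => csum (fun j => c j * D k (x + INR j * b)%R)%C (S n)).
  assert (HSE : Sol n p lambda E).
  { apply (Sol_csum n p lambda D (fun j k (x : R) => c j * D k (x + INR j * b)%R)%C (S n) HS).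
    intros j. apply Sol_scale. apply HT. }
  assert (HE0 : forall i, (i < n)%nat -> E i 0 = 0%C).
  { intros i Hi. unfold E. rewrite <- (Hc i Hi). apply csum_ext_loc. intros j _. rewrite Rplus_0_l. reflexivity. }
  pose proof (uniq n p lambda E M ltac:(lia) HM HMb HSE HE0) as HU.
  set (a := fun m : Z => psi (IZR m * b)).
  assert (HR : forall m : Z, csum (fun j => c j * a (m + Z.of_nat j)%Z)%C (S n) = 0%C).
  { intros m. rewrite <- (HU (IZR m * b)). unfold E. apply csum_ext_loc. intros j _.
    unfold a. rewrite <- HD0. f_equal. f_equal. rewrite plus_IZR, <- INR_IZR_INZ. ring. }
  destruct Hnt as [jw [Hjw Hcw]].
  destruct (exists_max (fun j => c j <> 0%C) n) as [j2 [Hj2 [Hc2 Hm2]]]. eauto.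
  destruct (exists_min (fun j => c j <> 0%C) jw Hcw) as [j1 [Hc1 Hm1]].
  assert (Hj1 : (j1 <= n)%nat). { destruct (Nat.le_gt_cases j1 n); auto. exfalso. apply (Hm1 jw); auto. lia. }
  assert (Hwin : forall N : nat, forall m : Z, (- Z.of_nat N <= m <= Z.of_nat n - 1 + Z.of_nat N)%Z -> a m = 0%C).
  { induction N; intros m Hm.
    - unfold a. replace m with (Z.of_nat (Z.to_nat m)) by lia. rewrite <- INR_IZR_INZ. apply Hz. lia.
    - destruct (Z.eq_dec m (Z.of_nat n + Z.of_nat N)%Z) as [Em|Nm1].
      + pose proof (HR (m - Z.of_nat j2)%Z) as H.
        assert (Hs : csum (fun j => c j * a (m - Z.of_nat j2 + Z.of_nat j)%Z)%C (S n)
                     = (c j2 * a (m - Z.of_nat j2 + Z.of_nat j2)%Z)%C).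
        { apply (csum_single (fun j => c j * a (m - Z.of_nat j2 + Z.of_nat j)%Z)%C). lia.
          intros j Hj Hne. destruct (Nat.lt_ge_cases j j2).
          -- rewrite IHN. ring. lia.
          -- assert (Hcz : c j = 0%C). { apply NNPP. intros Hcj. apply (Hm2 j); auto; lia. }
             rewrite Hcz. ring. }
        rewrite Hs in H.
        replace (m - Z.of_nat j2 + Z.of_nat j2)%Z with m in H by lia. exact (Cmult_cancel (c j2) (a m) Hc2 H).
      + destruct (Z.eq_dec m (- Z.of_nat N - 1)%Z) as [Em2|Nm2].
        * pose proof (HR (m - Z.of_nat j1)%Z) as H'.
          assert (Hs' : csum (fun j => c j * a (m - Z.of_nat j1 + Z.of_nat j)%Z)%C (S n)
                     = (c j1 * a (m - Z.of_nat j1 + Z.of_nat j1)%Z)%C).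
          { apply (csum_single (fun j => c j * a (m - Z.of_nat j1 + Z.of_nat j)%Z)%C). lia.
            intros j Hj Hne. destruct (Nat.lt_ge_cases j j1).
             ++ assert (Hcz : c j = 0%C). { apply NNPP. intros Hcj. apply (Hm1 j); auto. }
                rewrite Hcz. ring.
             ++ rewrite IHN. ring. lia. }
          rewrite Hs' in H'.
          replace (m - Z.of_nat j1 + Z.of_nat j1)%Z with m in H' by lia. exact (Cmult_cancel (c j1) (a m) Hc1 H').
        * apply IHN. lia. }
  intros k. apply (Hwin (Z.to_nat (Z.abs k))). lia.
Qed.
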